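(* Let $\mathcal{T}$ be a K3 category and let $A\xrightarrow{i}E\xrightarrow{j}B\xrightarrow{\delta}A[1]$ be a distinguished triangle in $\mathcal{T}$ such that $(A,B)^r=0$ for all $r\le 0$ and $(B,B)^s=0$ for all $s<0$. Then $(A,A)^1+(B,B)^1\le (E,E)^1$.
   Context: All categories are linear over a field $k$ of characteristic $\neq 2$ and of finite type ($\bigoplus_i\mathrm{Hom}(E,F[i])$ finite-dimensional). A K3 category is such a triangulated category in which the double shift $E\mapsto E[2]$ is a Serre functor, i.e. $\mathrm{Hom}(E,F)\cong\mathrm{Hom}(F,E[2])^*$ functorially. Notation: $(E,F)^i:=\dim_k\mathrm{Hom}(E,F[i])$. *)

(* Defs.v *)
From HB Require Import structures.
From mathcomp Require Import all_boot all_order all_algebra.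
Set Implicit Arguments. Unset Strict Implicit. Unset Printing Implicit Defensive.
Import Order.TTheory GRing.Theory Num.Theory.
Local Open Scope ring_scope.

Record triangle (O : Type) (H : O -> O -> Type) (S : O -> O) := Tri {
  tX : O; tY : O; tZ : O;
  tf : H tX tY; tg : H tY tZ; th : H tZ (S tX) }.
Arguments Tri {O H S tX tY tZ}.

Record pretri (k : fieldType) := PreTri {
  obj : Type;
  Hm : obj -> obj -> vectType k;
  comp : forall X Y Z : obj, Hm Y Z -> Hm X Y -> Hm X Z;
  idm : forall X : obj, Hm X X;
  sh : obj -> obj;
  shm : forall X Y : obj, Hm X Y -> Hm (sh X) (sh Y);
  dist : triangle Hm sh -> Prop }.
Arguments obj {k}. Arguments Hm {k p}. Arguments comp {k p X Y Z}.
Arguments idm {k p}. Arguments sh {k p}. Arguments shm {k p X Y}.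
Arguments dist {k p}.

Section TriDefs.
Variables (k : fieldType) (T : pretri k).
Local Notation obj := (obj T).

Definition is_iso (X Y : obj) (f : Hm X Y) :=
  exists g : Hm Y X, comp g f = idm X /\ comp f g = idm Y.

Definition is_zero_obj (Z : obj) :=
  forall Y : obj, \dim (fullv : {vspace Hm Z Y}) = 0%N /\
                  \dim (fullv : {vspace Hm Y Z}) = 0%N.

Definition linear_category :=
  [/\ (forall (W X Y Z : obj) (h : Hm Y Z) (g : Hm X Y) (f : Hm W X),
          comp h (comp g f) = comp (comp h g) f),
      (forall (X Y : obj) (f : Hm X Y), comp (idm Y) f = f /\ comp f (idm X) = f),
      (forall (X Y Z : obj) (g : Hm Y Z) (a : k) (f f' : Hm X Y),
          comp g (a *: f + f') = a *: comp g f + comp g f') &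
      (forall (X Y Z : obj) (a : k) (g g' : Hm Y Z) (f : Hm X Y),
          comp (a *: g + g') f = a *: comp g f + comp g' f)].

Definition additive :=
  (exists Z : obj, is_zero_obj Z) /\
  forall X Y : obj, exists (S : obj) (i1 : Hm X S) (i2 : Hm Y S)
                           (p1 : Hm S X) (p2 : Hm S Y),
    [/\ comp p1 i1 = idm X, comp p2 i2 = idm Y, comp p1 i2 = 0,
        comp p2 i1 = 0 & comp i1 p1 + comp i2 p2 = idm S].

Definition shift_autoequivalence :=
  [/\ (forall X : obj, shm (idm X) = idm (sh X)),
      (forall (X Y Z : obj) (g : Hm Y Z) (f : Hm X Y),
          shm (comp g f) = comp (shm g) (shm f)),
      (forall (X Y : obj) (a : k) (f f' : Hm X Y),
          shm (a *: f + f') = a *: shm f + shm f'),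
      (forall X Y : obj, bijective (@shm _ T X Y)) &
      (forall Y : obj, exists (X : obj) (f : Hm (sh X) Y), is_iso f)].

Definition tri_morph (t t' : triangle (@Hm _ T) sh)
  (a : Hm (tX t) (tX t')) (b : Hm (tY t) (tY t')) (c : Hm (tZ t) (tZ t')) :=
  [/\ comp b (tf t) = comp (tf t') a,
      comp c (tg t) = comp (tg t') b &
      comp (shm a) (th t) = comp (th t') c].

Definition tri_iso (t t' : triangle (@Hm _ T) sh) :=
  exists (a : Hm (tX t) (tX t')) (b : Hm (tY t) (tY t')) (c : Hm (tZ t) (tZ t')),
    [/\ tri_morph a b c, is_iso a, is_iso b & is_iso c].

Definition TR1 :=
  [/\ (forall t t', dist t -> tri_iso t t' -> dist t'),
      (forall (X Z : obj), is_zero_obj Z ->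
          dist (Tri (idm X) (0 : Hm X Z) (0 : Hm Z (sh X)))) &
      (forall (X Y : obj) (f : Hm X Y),
          exists (Z : obj) (g : Hm Y Z) (h : Hm Z (sh X)), dist (Tri f g h))].

Definition TR2 :=
  forall (X Y Z : obj) (f : Hm X Y) (g : Hm Y Z) (h : Hm Z (sh X)),
    dist (Tri f g h) <-> dist (Tri g h (- shm f)).

Definition TR3 :=
  forall t t', dist t -> dist t' ->
  forall (a : Hm (tX t) (tX t')) (b : Hm (tY t) (tY t')),
    comp b (tf t) = comp (tf t') a ->
    exists c : Hm (tZ t) (tZ t'), tri_morph a b c.

Definition TR4 :=
  forall (X Y Z Z' X' Y' : obj) (f : Hm X Y) (g : Hm Y Z)
         (u : Hm Y Z') (u' : Hm Z' (sh X))
         (v : Hm Z X') (v' : Hm X' (sh Y))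
         (w : Hm Z Y') (w' : Hm Y' (sh X)),
    dist (Tri f u u') -> dist (Tri g v v') -> dist (Tri (comp g f) w w') ->
    exists (a : Hm Z' Y') (b : Hm Y' X'),
      [/\ dist (Tri a b (comp (shm u) v')),
          comp a u = comp w g, comp w' a = u',
          comp b w = v & comp v' b = comp (shm f) w'].

Definition triangulated :=
  [/\ linear_category, additive, shift_autoequivalence & [/\ TR1, TR2, TR3 & TR4]].

(* (E,F)^i = dim Hom(E, F[i]); for i = -(n+1) < 0 we use the canonical
   identification Hom(E, F[-(n+1)]) = Hom(E[n+1], F). *)
Definition homdim (E F : obj) (i : int) : nat :=
  match i with
  | Posz n => \dim (fullv : {vspace Hm E (iter n sh F)})
  | Negz n => \dim (fullv : {vspace Hm (iter n.+1 sh E) F})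
  end.

Definition finite_type :=
  forall E F : obj, exists N : nat, forall i : int, (N < `|i|)%N -> homdim E F i = 0%N.

(* Serre duality with Serre functor [2]: a natural isomorphism
   Hom(E,F) ~= Hom(F,E[2])^*, encoded as a natural nondegenerate pairing. *)
Definition serre2 (eta : forall E F : obj, Hm E F -> Hm F (sh (sh E)) -> k) :=
  [/\ (forall E F (a : k) (f f' : Hm E F) (p : Hm F (sh (sh E))),
          eta E F (a *: f + f') p = a * eta E F f p + eta E F f' p),
      (forall E F (a : k) (f : Hm E F) (p p' : Hm F (sh (sh E))),
          eta E F f (a *: p + p') = a * eta E F f p + eta E F f p'),
      (forall E F (f : Hm E F), f != 0 -> exists p, eta E F f p != 0) &
   [/\
      (forall E F (p : Hm F (sh (sh E))), p != 0 -> exists f, eta E F f p != 0),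
      (forall E F F' (phi : Hm F F') (f : Hm E F) (p : Hm F' (sh (sh E))),
          eta E F' (comp phi f) p = eta E F f (comp p phi)) &
      (forall E E' F (chi : Hm E' E) (f : Hm E F) (p : Hm F (sh (sh E'))),
          eta E' F (comp f chi) p = eta E F f (comp (shm (shm chi)) p))]].

Definition K3_category :=
  [/\ triangulated, finite_type & exists eta, serre2 eta].

End TriDefs.

(* Main.v *)
Require Import Defs.
From HB Require Import structures.
From mathcomp Require Import all_boot all_order all_algebra.
Set Implicit Arguments. Unset Strict Implicit. Unset Printing Implicit Defensive.
Import Order.TTheory GRing.Theory Num.Theory.
Local Open Scope ring_scope.
Local Notation comp := Defs.comp.

Lemma compr_lin (k : fieldType) (T : pretri k) (hL : linear_category T)
  (X Y Z : obj T) (g : Hm Y Z) :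
  (forall (f f' : Hm X Y), comp g (f + f') = comp g f + comp g f') /\
  (forall (f : Hm X Y), comp g (- f) = - comp g f) /\ comp g (0 : Hm X Y) = 0.
Proof.
case: hL => _ _ hR _.
have D : forall (f f' : Hm X Y), comp g (f + f') = comp g f + comp g f'.
  by move=> f f'; rewrite -[f in LHS]scale1r hR scale1r.
have Z0 : comp g (0 : Hm X Y) = 0.
  by have h := D 0 0; rewrite addr0 in h; apply: (addrI (comp g (0 : Hm X Y))); rewrite addr0 -h.
split=> //; split=> // f.
by apply/eqP; rewrite -subr_eq0 opprK -D addNr Z0.
Qed.

Lemma compl_lin (k : fieldType) (T : pretri k) (hL : linear_category T)
  (X Y Z : obj T) (f : Hm X Y) :
  (forall (g g' : Hm Y Z), comp (g + g') f = comp g f + comp g' f) /\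
  (forall (g : Hm Y Z), comp (- g) f = - comp g f) /\ comp (0 : Hm Y Z) f = 0.
Proof.
case: hL => _ _ _ hR.
have D : forall (g g' : Hm Y Z), comp (g + g') f = comp g f + comp g' f.
  by move=> g g'; rewrite -[g in LHS]scale1r hR scale1r.
have Z0 : comp (0 : Hm Y Z) f = 0.
  by have h := D 0 0; rewrite addr0 in h; apply: (addrI (comp (0 : Hm Y Z) f)); rewrite addr0 -h.
split=> //; split=> // g.
by apply/eqP; rewrite -subr_eq0 opprK -D addNr Z0.
Qed.

Lemma shm_lin (k : fieldType) (T : pretri k) (hS : shift_autoequivalence T)
  (X Y : obj T) :
  (forall (f f' : Hm X Y), shm (f + f') = shm f + shm f') /\
  (forall (f : Hm X Y), shm (- f) = - shm f) /\ shm (0 : Hm X Y) = 0.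
Proof.
case: hS => _ _ hR _ _.
have D : forall (f f' : Hm X Y), shm (f + f') = shm f + shm f'.
  by move=> f f'; rewrite -[f in LHS]scale1r hR scale1r.
have Z0 : shm (0 : Hm X Y) = 0.
  by have h := D 0 0; rewrite addr0 in h; apply: (addrI (shm (0 : Hm X Y))); rewrite addr0 -h.
split=> //; split=> // f.
by apply/eqP; rewrite -subr_eq0 opprK -D addNr Z0.
Qed.

Arguments compr_lin {k T} hL {X Y Z}.
Arguments compl_lin {k T} hL {X Y Z}.

Lemma dim0_eq0 (k : fieldType) (V : vectType k) :
  \dim (fullv : {vspace V}) = 0%N -> forall v : V, v = 0.
Proof.
move=> /eqP; rewrite dimv_eq0 => /eqP h v.
by apply/eqP; rewrite -memv0 -h memvf.
Qed.

Section Aux.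
Variables (k : fieldType) (T : pretri k).
Lemma comp0r (hL : linear_category T) (X Y Z : obj T) (g : Hm Y Z) :
  comp g (0 : Hm X Y) = 0.
Proof. exact: (proj2 (proj2 (compr_lin hL g))). Qed.
Lemma compNr (hL : linear_category T) (X Y Z : obj T) (g : Hm Y Z) (f : Hm X Y) :
  comp g (- f) = - comp g f.
Proof. exact: (proj1 (proj2 (compr_lin hL g))). Qed.
Lemma compDr (hL : linear_category T) (X Y Z : obj T) (g : Hm Y Z) (f f' : Hm X Y) :
  comp g (f + f') = comp g f + comp g f'.
Proof. exact: (proj1 (compr_lin hL g)). Qed.
Lemma comp0l (hL : linear_category T) (X Y Z : obj T) (f : Hm X Y) :
  comp (0 : Hm Y Z) f = 0.
Proof. exact: (proj2 (proj2 (compl_lin hL f))). Qed.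
Lemma compNl (hL : linear_category T) (X Y Z : obj T) (g : Hm Y Z) (f : Hm X Y) :
  comp (- g) f = - comp g f.
Proof. exact: (proj1 (proj2 (compl_lin hL f))). Qed.
Lemma compDl (hL : linear_category T) (X Y Z : obj T) (g g' : Hm Y Z) (f : Hm X Y) :
  comp (g + g') f = comp g f + comp g' f.
Proof. exact: (proj1 (compl_lin hL f)). Qed.
Lemma shm0 (hS : shift_autoequivalence T) (X Y : obj T) : shm (0 : Hm X Y) = 0.
Proof. exact: (proj2 (proj2 (shm_lin hS X Y))). Qed.
Lemma shmN (hS : shift_autoequivalence T) (X Y : obj T) (f : Hm X Y) : shm (- f) = - shm f.
Proof. exact: (proj1 (proj2 (shm_lin hS X Y)) f). Qed.
Lemma compA' (hL : linear_category T) (W X Y Z : obj T) (h : Hm Y Z) (g : Hm X Y) (f : Hm W X) :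
  comp h (comp g f) = comp (comp h g) f.
Proof. by case: hL => a _ _ _; apply: a. Qed.
Lemma comp1l (hL : linear_category T) (X Y : obj T) (f : Hm X Y) : comp (idm Y) f = f.
Proof. by case: hL => _ a _ _; case: (a _ _ f). Qed.
Lemma comp1r (hL : linear_category T) (X Y : obj T) (f : Hm X Y) : comp f (idm X) = f.
Proof. by case: hL => _ a _ _; case: (a _ _ f). Qed.
End Aux.

Lemma comp_dist0 (k : fieldType) (T : pretri k) (hT : triangulated T)
  (X Y Z : obj T) (f : Hm X Y) (g : Hm Y Z) (h : Hm Z (sh X)) :
  dist (Tri f g h) -> comp g f = 0.
Proof.
case: hT => hL [[Z0 hZ0] _] hS [[_ t1 _] _ tr3 _] dt.
have d1 := t1 X Z0 hZ0.
have [c [_ e _]] := tr3 _ _ d1 dt (idm X) f erefl.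
rewrite /= in e; rewrite -e.
exact: (proj2 (proj2 (compr_lin hL c))).
Qed.

Lemma cov_exact (k : fieldType) (T : pretri k) (hT : triangulated T)
  (X Y Z W : obj T) (f : Hm X Y) (g : Hm Y Z) (h : Hm Z (sh X)) :
  dist (Tri f g h) -> forall u : Hm W Y, comp g u = 0 ->
  exists v : Hm W X, u = comp f v.
Proof.
case: hT => hL [[Z0 hZ0] _] hS [[_ t1 _] tr2 tr3 _] dt u gu.
have d1 := t1 W Z0 hZ0.
move/tr2: d1 => d1. move/tr2: dt => dt.
have sq : comp (0 : Hm Z0 Z) (0 : Hm W Z0) = comp g u.
  by rewrite gu (comp0l hL).
have [c [_ _ e]] := tr3 _ _ d1 dt u (0 : Hm Z0 Z) sq.
move: e => /=.
case: (hS) => hid hcomp _ hbij _.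
have [sinv sK Ks] := hbij W X.
exists (sinv c).
apply: (bij_inj (hbij W Y)).
move: e; rewrite (compNr hL) (compNl hL) hid (comp1r hL).
by move/oppr_inj => ->; rewrite hcomp Ks.
Qed.

Lemma contra_exact (k : fieldType) (T : pretri k) (hT : triangulated T)
  (X Y Z W : obj T) (f : Hm X Y) (g : Hm Y Z) (h : Hm Z (sh X)) :
  dist (Tri f g h) -> forall u : Hm Y W, comp u f = 0 ->
  exists v : Hm Z W, u = comp v g.
Proof.
case: hT => hL [[Z0 hZ0] _] hS [[tiso t1 _] tr2 tr3 _] dt u uf.
case: (hS) => hid hcomp _ hbij hess.
have [X1 [phi [psi [e1 e2]]]] := hess Z0.
have d1 := t1 W Z0 hZ0.
have d2 : dist (Tri (idm W) (0 : Hm W (sh X1)) (0 : Hm (sh X1) (sh W))).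
  apply: (tiso _ _ d1).
  have iid : forall V : obj T, is_iso (idm V).
    by move=> V; exists (idm V); rewrite (comp1l hL).
  exists (idm W), (idm W), psi; split => //=; last by exists phi.
  split => //=.
    by rewrite (comp0r hL) (comp0l hL).
  by rewrite (comp0r hL) (comp0l hL).
have d3 : dist (Tri (0 : Hm X1 W) (idm W) (0 : Hm W (sh X1))).
  apply/tr2.
  by rewrite (shm0 hS) oppr0.
have sq : comp u f = comp (0 : Hm X1 W) (0 : Hm X X1).
  by rewrite uf (comp0l hL).
have [c [_ e _]] := tr3 _ _ dt d3 (0 : Hm X X1) u sq.
exists c; move: e => /= ->.
by rewrite (comp1l hL).
Qed.

Lemma serre_zero (k : fieldType) (T : pretri k) (hK : K3_category T)
  (A B : obj T) : (forall x : Hm A B, x = 0) ->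
  forall p : Hm B (sh (sh A)), p = 0.
Proof.
case: hK => _ _ [eta [hl _ _ [hnd _ _]]] h0 p.
apply/eqP; apply/negPn/negP => /hnd [f].
rewrite (h0 f).
have := hl A B 1 0 0 p; rewrite scale1r addr0 mul1r => e.
have : eta A B 0 p = 0 by apply: (addrI (eta A B 0 p)); rewrite addr0 -e.
by move=> ->; rewrite eqxx.
Qed.

Lemma linfunP (k : fieldType) (U W : vectType k) (f : U -> W)
  (hf : forall a x y, f (a *: x + y) = a *: f x + f y) :
  exists F : 'Hom(U, W), forall x, F x = f x.
Proof.
have lf : linear_for *:%R f by move=> a x y; exact: hf.
pose fM := GRing.isLinear.Build _ _ _ _ f lf.
pose fL : {linear U -> W} := HB.pack f fM.
by exists (linfun fL) => x; rewrite lfunE.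
Qed.

Theorem lemma2p7 (k : fieldType) (T : pretri k) (A E B : obj T)
    (i : Hm A E) (j : Hm E B) (d : Hm B (sh A)) :
  (2%:R : k) != 0 ->
  K3_category T ->
  dist (Tri i j d) ->
  (forall r : int, r <= 0 -> homdim A B r = 0%N) ->
  (forall s : int, s < 0 -> homdim B B s = 0%N) ->
  (homdim A A 1 + homdim B B 1 <= homdim E E 1)%N.
Proof.
move=> _ hK dt hAB _.
have hT : triangulated T by case: hK.
case: (hT) => hL _ hS [_ tr2 _ _].
case: (hS) => hid hcomp hshl hbij _.
have hAB0 : forall x : Hm A B, x = 0.
  exact: (@dim0_eq0 k (Hm A B) (hAB 0 (lexx _))).
have hBAA := serre_zero hK hAB0.
have ji : comp j i = 0 := comp_dist0 hT dt.
have dt2 := dt; move/tr2: dt2 => dt2.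
have dt3 := dt2; move/tr2: dt3 => dt3.
have dt4 := dt3; move/tr2: dt4 => dt4.
have dt5 := dt4; move/tr2: dt5 => dt5.
have I1 : forall h : Hm A (sh A), comp (shm i) h = 0 -> h = 0.
  move=> h e.
  have e' : comp (- shm i) h = 0 by rewrite (compNl hL) e oppr0.
  have [v ->] := cov_exact hT dt3 e'.
  by rewrite (hAB0 v) (comp0r hL).
have I2 : forall g : Hm B (sh B), comp g j = 0 -> g = 0.
  move=> g e.
  have [v ->] := contra_exact hT dt2 e.
  have [s sK Ks] := hbij A B.
  by rewrite -(Ks v) (hAB0 (s v)) (shm0 hS) (comp0l hL).
have S1 : forall h : Hm A (sh A), exists f0 : Hm E (sh E), comp f0 i = comp (shm i) h.
  move=> h.
  have e : comp (shm (comp (shm i) h)) d = 0.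
    by rewrite hcomp -(compA' hL) (hBAA (comp (shm h) d)) (comp0r hL).
  have [v ev] := contra_exact hT dt3 e.
  have [s sK Ks] := hbij E (sh E).
  exists (- s v).
  apply: (bij_inj (hbij A (sh E))).
  rewrite ev.
  have vw : v = shm (s v) by rewrite Ks.
  move: (s v) vw => w ->.
  by rewrite (compNr hL) -hcomp (compNl hL) (shmN hS).
have S3 : forall u : Hm B (sh B), exists v : Hm B (sh E), comp (shm j) v = u.
  move=> u.
  have e : comp (- shm d) u = 0 by rewrite (hBAA (comp (- shm d) u)).
  have [v ->] := cov_exact hT dt5 e.
  by exists (- v); rewrite (compNr hL) (compNl hL).
have S : forall h g, exists f : Hm E (sh E),
    comp f i = comp (shm i) h /\ comp (shm j) f = comp g j.
  move=> h g.
  have [f0 ef0] := S1 h.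
  pose e := comp (shm j) f0 - comp g j.
  have ei : comp e i = 0.
    rewrite /e (compDl hL) (compNl hL) -!(compA' hL) ef0 ji (comp0r hL) oppr0 addr0.
    by rewrite (compA' hL) -hcomp ji (shm0 hS) (comp0l hL).
  have [u eu] := contra_exact hT dt ei.
  have [v ev] := S3 u.
  exists (f0 - comp v j); split.
    by rewrite (compDl hL) (compNl hL) -(compA' hL) ji (comp0r hL) oppr0 addr0.
  rewrite (compDr hL) (compNr hL) (compA' hL) ev -eu /e.
  by rewrite opprB addrC subrK.
pose P := (Hm E (sh E) * (Hm A (sh A) * Hm B (sh B)))%type.
pose Q := (Hm A (sh E) * Hm E (sh B))%type.
pose lam := fun x : P => ((comp x.1 i - comp (shm i) x.2.1,
                           comp (shm j) x.1 - comp x.2.2 j) : Q).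
have [L LE] : exists L : 'Hom(P, Q), forall x, L x = lam x.
  apply: linfunP => a [f [h g]] [f' [h' g']].
  case: (hL) => _ _ hR hLl.
  have z1 : forall (U1 U2 : vectType k) (c : k) (x : (U1 * U2)%type), (c *: x).1 = c *: x.1 by [].
  have z2 : forall (U1 U2 : vectType k) (c : k) (x : (U1 * U2)%type), (c *: x).2 = c *: x.2 by [].
  rewrite /lam /=; congr (_, _); rewrite ?z1 ?z2 /=.
    by rewrite hLl hR scalerBr opprD addrACA.
  by rewrite hLl hR scalerBr opprD addrACA.
have [F1 F1E] : exists F : 'Hom(P, Hm E (sh E)), forall x, F x = x.1.
  by apply: linfunP.
have [F2 F2E] : exists F : 'Hom(P, (Hm A (sh A) * Hm B (sh B))%type),
    forall x, F x = x.2.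
  by apply: linfunP.
pose SS := lker L.
have imF2 : (F2 @: SS)%VS = fullv.
  apply/eqP; rewrite eqEsubv subvf /=; apply/subvP => [[h g]] _.
  have [f [e1 e2]] := S h g.
  have inS : (f, (h, g)) \in SS.
    rewrite memv_ker LE /lam /= e1 e2 !subrr; done.
  by rewrite -[(h, g)]/((f, (h, g)).2) -F2E memv_img.
have kerF1 : (SS :&: lker F1)%VS = 0%VS.
  apply/eqP; rewrite -subv0; apply/subvP => [[f [h g]]].
  rewrite memv_cap !memv_ker LE F1E /= memv0 => /andP[/eqP e /eqP f0].
  have e1 := congr1 fst e; have e2 := congr1 snd e.
  rewrite /= f0 (comp0l hL) sub0r in e1; rewrite /= f0 (comp0r hL) sub0r in e2.
  move/eqP: e1; rewrite oppr_eq0 => /eqP /I1 ->.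
  move/eqP: e2; rewrite oppr_eq0 => /eqP /I2 ->.
  by rewrite f0.
change (\dim (fullv : {vspace Hm A (sh A)}) + \dim (fullv : {vspace Hm B (sh B)})
   <= \dim (fullv : {vspace Hm E (sh E)}))%N.
have dP : \dim (fullv : {vspace (Hm A (sh A) * Hm B (sh B))%type}) =
   (\dim (fullv : {vspace Hm A (sh A)}) + \dim (fullv : {vspace Hm B (sh B)}))%N.
  by rewrite !dimvf.
rewrite -dP -imF2.
apply: (@leq_trans (\dim SS)).
  by rewrite -(limg_ker_dim F2 SS) leq_addl.
by rewrite -(limg_dim_eq kerF1); apply: dimvS; apply: subvf.
Qed.
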